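(* Let $A$ be a Banach algebra, $\phi\in\Delta(A)$, and $I$ a closed two-sided ideal of $A$ with $\phi|_I\neq0$. If $A$ is approximately left $\phi$-biprojective, then $I$ is approximately left $\phi|_I$-biprojective.
   Context: $\Delta(A)$ is the set of characters of $A$; $A\otimes_pA$ is the projective tensor product with $a\cdot(b\otimes c)=ab\otimes c$, $(b\otimes c)\cdot a=b\otimes ca$, $\pi_A(a\otimes b)=ab$. For a Banach algebra $A$ and $\phi\in\Delta(A)$, $A$ is approximately left $\phi$-biprojective if there is a net $(\rho_\alpha)$ of bounded linear maps $A\to A\otimes_pA$ such that for all $a,x\in A$: $\|a\cdot\rho_\alpha(x)-\rho_\alpha(ax)\|\to0$, $\|\rho_\alpha(xa)-\phi(a)\rho_\alpha(x)\|\to0$, and $\phi(\pi_A(\rho_\alpha(x)))-\phi(x)\to0$. *)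

(* Defs.v *)
From Stdlib Require Import Reals ClassicalEpsilon.
Open Scope R_scope.
Set Implicit Arguments.

Record Cplx := mkC { Cre : R; Cim : R }.
Definition C0 : Cplx := mkC 0 0.
Definition C1 : Cplx := mkC 1 0.
Definition Cadd (z w : Cplx) : Cplx := mkC (Cre z + Cre w) (Cim z + Cim w).
Definition Copp (z : Cplx) : Cplx := mkC (- Cre z) (- Cim z).
Definition Csub (z w : Cplx) : Cplx := Cadd z (Copp w).
Definition Cmul (z w : Cplx) : Cplx :=
  mkC (Cre z * Cre w - Cim z * Cim w) (Cre z * Cim w + Cim z * Cre w).
Definition Cnorm (z : Cplx) : R := sqrt (Cre z * Cre z + Cim z * Cim z).

Record BanachSpace := {
  bcar :> Type;
  bzero : bcar;
  badd : bcar -> bcar -> bcar;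
  bopp : bcar -> bcar;
  bscal : Cplx -> bcar -> bcar;
  bnorm : bcar -> R;
  badd_assoc : forall x y z, badd x (badd y z) = badd (badd x y) z;
  badd_comm : forall x y, badd x y = badd y x;
  badd_0 : forall x, badd bzero x = x;
  badd_opp : forall x, badd x (bopp x) = bzero;
  bscal_1 : forall x, bscal C1 x = x;
  bscal_assoc : forall a b x, bscal a (bscal b x) = bscal (Cmul a b) x;
  bscal_addv : forall a x y, bscal a (badd x y) = badd (bscal a x) (bscal a y);
  bscal_adds : forall a b x, bscal (Cadd a b) x = badd (bscal a x) (bscal b x);
  bnorm_eq0 : forall x, bnorm x = 0 -> x = bzero;
  bnorm_triangle : forall x y, bnorm (badd x y) <= bnorm x + bnorm y;
  bnorm_scal : forall a x, bnorm (bscal a x) = Cnorm a * bnorm x;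
  bcomplete : forall u : nat -> bcar,
    (forall eps, 0 < eps -> exists N, forall m n, (N <= m)%nat -> (N <= n)%nat ->
        bnorm (badd (u m) (bopp (u n))) < eps) ->
    exists l, forall eps, 0 < eps -> exists N, forall n, (N <= n)%nat ->
        bnorm (badd (u n) (bopp l)) < eps
}.
Arguments bzero {_}. Arguments badd {_}. Arguments bopp {_}.
Arguments bscal {_}. Arguments bnorm {_}.

Definition bsub {E : BanachSpace} (x y : E) : E := badd x (bopp y).

Definition seq_converges {E : BanachSpace} (u : nat -> E) (l : E) : Prop :=
  forall eps, 0 < eps -> exists N, forall n, (N <= n)%nat -> bnorm (bsub (u n) l) < eps.

Record BanachAlgebra := {
  bsp :> BanachSpace;
  bmul : bsp -> bsp -> bsp;
  bmul_assoc : forall x y z, bmul x (bmul y z) = bmul (bmul x y) z;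
  bmul_addl : forall x y z, bmul (badd x y) z = badd (bmul x z) (bmul y z);
  bmul_addr : forall x y z, bmul x (badd y z) = badd (bmul x y) (bmul x z);
  bmul_scall : forall a x y, bmul (bscal a x) y = bscal a (bmul x y);
  bmul_scalr : forall a x y, bmul x (bscal a y) = bscal a (bmul x y);
  bnorm_mul : forall x y, bnorm (bmul x y) <= bnorm x * bnorm y
}.
Arguments bmul {_}.

Definition is_linear {E F : BanachSpace} (f : E -> F) : Prop :=
  (forall x y, f (badd x y) = badd (f x) (f y)) /\
  (forall a x, f (bscal a x) = bscal a (f x)).

Definition bounded_linear {E F : BanachSpace} (f : E -> F) : Prop :=
  is_linear f /\ exists M, forall x, bnorm (f x) <= M * bnorm x.

Definition is_bilinear {E F G : BanachSpace} (b : E -> F -> G) : Prop :=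
  (forall y, is_linear (fun x => b x y)) /\ (forall x, is_linear (b x)).

(* ---------- projective tensor product, via its universal property ----------
   (T, tens) is the projective tensor product E (x)_p F iff tens is bilinear
   of norm <= 1 and L |-> L o tens is an isometric bijection between bounded
   linear maps T -> G and bounded bilinear maps E x F -> G, for every Banach G.
   This determines E (x)_p F up to isometric isomorphism. *)
Record PTensor (E F : BanachSpace) := {
  ptT :> BanachSpace;
  ptens : E -> F -> ptT;
  ptens_bilin : is_bilinear ptens;
  ptens_norm : forall x y, bnorm (ptens x y) <= bnorm x * bnorm y;
  ptens_univ : forall (G : BanachSpace) (b : E -> F -> G) (M : R),
    0 <= M -> is_bilinear b ->
    (forall x y, bnorm (b x y) <= M * bnorm x * bnorm y) ->
    exists L : ptT -> G, is_linear L /\ (forall t, bnorm (L t) <= M * bnorm t) /\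
      (forall x y, L (ptens x y) = b x y);
  ptens_uniq : forall (G : BanachSpace) (L1 L2 : ptT -> G),
    bounded_linear L1 -> bounded_linear L2 ->
    (forall x y, L1 (ptens x y) = L2 (ptens x y)) -> forall t, L1 t = L2 t
}.
Arguments ptens {_ _}.

Definition lact {A : BanachAlgebra} (P : PTensor A A) (a : A) : P -> P :=
  epsilon (inhabits (fun t : P => t))
    (fun L => bounded_linear L /\
       forall b c, L (ptens P b c) = ptens P (bmul a b) c).

Definition ract {A : BanachAlgebra} (P : PTensor A A) (a : A) : P -> P :=
  epsilon (inhabits (fun t : P => t))
    (fun L => bounded_linear L /\
       forall b c, L (ptens P b c) = ptens P b (bmul c a)).

Definition ppi {A : BanachAlgebra} (P : PTensor A A) : P -> A :=
  epsilon (inhabits (fun _ : P => @bzero A))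
    (fun L => bounded_linear L /\
       forall b c, L (ptens P b c) = bmul b c).

Definition is_character {A : BanachAlgebra} (phi : A -> Cplx) : Prop :=
  (forall x y, phi (badd x y) = Cadd (phi x) (phi y)) /\
  (forall a x, phi (bscal a x) = Cmul a (phi x)) /\
  (forall x y, phi (bmul x y) = Cmul (phi x) (phi y)) /\
  (exists x, phi x <> C0).

Definition directed {D : Type} (le : D -> D -> Prop) : Prop :=
  inhabited D /\ (forall a, le a a) /\
  (forall a b c, le a b -> le b c -> le a c) /\
  (forall a b, exists c, le a c /\ le b c).

Definition net_to0 {D : Type} (le : D -> D -> Prop) (f : D -> R) : Prop :=
  forall eps, 0 < eps -> exists a0, forall a, le a0 a -> Rabs (f a) < eps.

Definition approx_left_biproj {A : BanachAlgebra} (P : PTensor A A)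
    (phi : A -> Cplx) : Prop :=
  exists (D : Type) (le : D -> D -> Prop) (rho : D -> A -> P),
    directed le /\
    (forall i, bounded_linear (rho i)) /\
    (forall a x, net_to0 le
       (fun i => bnorm (bsub (lact P a (rho i x)) (rho i (bmul a x))))) /\
    (forall a x, net_to0 le
       (fun i => bnorm (bsub (rho i (bmul x a)) (bscal (phi a) (rho i x))))) /\
    (forall x, net_to0 le
       (fun i => Cnorm (Csub (phi (ppi P (rho i x))) (phi x)))).

Definition closed_ideal {A : BanachAlgebra} (I : A -> Prop) : Prop :=
  I bzero /\
  (forall x y, I x -> I y -> I (badd x y)) /\
  (forall a x, I x -> I (bscal a x)) /\
  (forall a x, I x -> I (bmul a x)) /\
  (forall a x, I x -> I (bmul x a)) /\
  (forall (u : nat -> A) l, (forall n, I (u n)) -> seq_converges u l -> I l).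

(* j : B -> A presents B as the Banach algebra I (with the restricted
   operations and norm): j is an isometric algebra homomorphism onto I. *)
Definition presents_ideal {A B : BanachAlgebra} (I : A -> Prop) (j : B -> A) : Prop :=
  is_linear j /\
  (forall x y, j (bmul x y) = bmul (j x) (j y)) /\
  (forall x, bnorm (j x) = bnorm x) /\
  (forall y, I y <-> exists x, j x = y).

(* Main.v *)
Require Import Defs.
From Stdlib Require Import Reals ClassicalEpsilon Lra Lia.
Open Scope R_scope.
Set Implicit Arguments.

Section Grp.
Variable E : BanachSpace.
Implicit Types x y z a b c : E.

Lemma addr0 x : badd x bzero = x.
Proof. rewrite badd_comm; apply badd_0. Qed.
Lemma addNr x : badd (bopp x) x = bzero.
Proof. rewrite badd_comm; apply badd_opp. Qed.
Lemma add_cancel a x y : badd a x = badd a y -> x = y.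
Proof.
  intro H. rewrite <- (badd_0 E x), <- (badd_0 E y), <- (addNr a), <- !badd_assoc, H.
  reflexivity.
Qed.
Lemma C0_add : Cadd C0 C0 = C0.
Proof. unfold Cadd, C0; simpl; f_equal; ring. Qed.
Lemma scal0 x : bscal C0 x = bzero.
Proof.
  apply eq_sym, (add_cancel (bscal C0 x)). rewrite addr0, <- bscal_adds, C0_add. reflexivity.
Qed.
Definition Cm1 : Cplx := mkC (-1) 0.
Lemma opp_scal x : bopp x = bscal Cm1 x.
Proof.
  apply (add_cancel x). rewrite badd_opp. rewrite <- (bscal_1 E x) at 1.
  rewrite <- bscal_adds. replace (Cadd Defs.C1 Cm1) with C0. now rewrite scal0.
  unfold Cadd, Defs.C1, Cm1, C0; simpl; f_equal; ring.
Qed.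
Lemma norm_opp x : bnorm (bopp x) = bnorm x.
Proof.
  rewrite opp_scal, bnorm_scal. unfold Cnorm, Cm1; simpl.
  replace (-1 * -1 + 0 * 0) with 1 by ring. rewrite sqrt_1; ring.
Qed.
Lemma norm0 : bnorm (@bzero E) = 0.
Proof.
  rewrite <- (scal0 bzero), bnorm_scal. unfold Cnorm, C0; simpl.
  replace (0*0+0*0) with 0 by ring. rewrite sqrt_0; ring.
Qed.
Lemma norm_ge0 x : 0 <= bnorm x.
Proof.
  pose proof (bnorm_triangle E x (bopp x)). rewrite badd_opp, norm0, norm_opp in H. lra.
Qed.
Lemma oppK x : bopp (bopp x) = x.
Proof. apply (add_cancel (bopp x)). now rewrite badd_opp, addNr. Qed.
Lemma opp_add a b : bopp (badd a b) = badd (bopp a) (bopp b).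
Proof.
  apply (add_cancel (badd a b)). rewrite badd_opp.
  rewrite <- badd_assoc, (badd_comm _ (bopp a)), (badd_assoc _ b), badd_opp, badd_0, badd_opp.
  reflexivity.
Qed.
Lemma sub_split a b c : bsub a c = badd (bsub a b) (bsub b c).
Proof.
  unfold bsub. rewrite <- badd_assoc, (badd_assoc _ (bopp b)), addNr, badd_0. reflexivity.
Qed.
Lemma sub_addl z u v : bsub (badd z u) (badd z v) = bsub u v.
Proof.
  unfold bsub. rewrite opp_add, badd_assoc, (badd_comm _ z u), <- (badd_assoc _ u), badd_opp, addr0.
  reflexivity.
Qed.
Lemma sub_eq0 a b : bsub a b = bzero -> a = b.
Proof.
  unfold bsub; intro H. rewrite <- (addr0 a), <- (addNr b), badd_assoc, H, badd_0. reflexivity.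
Qed.
Lemma subrr a : bsub a a = bzero.
Proof. apply badd_opp. Qed.
Lemma norm_sub_sym a b : bnorm (bsub a b) = bnorm (bsub b a).
Proof.
  replace (bsub b a) with (bopp (bsub a b)). apply eq_sym, norm_opp.
  unfold bsub. rewrite opp_add, oppK, badd_comm. reflexivity.
Qed.
Lemma norm_sub_tri a b c : bnorm (bsub a c) <= bnorm (bsub a b) + bnorm (bsub b c).
Proof. rewrite (sub_split a b c). apply bnorm_triangle. Qed.
End Grp.

Lemma bl_pos (E F : BanachSpace) (f : E -> F) : bounded_linear f -> exists M, 0 <= M /\ forall x, bnorm (f x) <= M * bnorm x.
Proof.
  intros [_ [M HM]]. exists (Rabs M); split. apply Rabs_pos.
  intro x. eapply Rle_trans. apply HM. apply Rmult_le_compat_r. apply norm_ge0. apply Rle_abs.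
Qed.

Section Lin.
Variables E F G : BanachSpace.
Lemma lin0 (f : E -> F) : is_linear f -> f bzero = bzero.
Proof.
  intros [Ha Hs]. apply eq_sym, (add_cancel _ (f bzero)). rewrite addr0, <- Ha, badd_0. reflexivity.
Qed.
Lemma linN (f : E -> F) x : is_linear f -> f (bopp x) = bopp (f x).
Proof. intros [Ha Hs]. rewrite !opp_scal, Hs. reflexivity. Qed.
Lemma linB (f : E -> F) x y : is_linear f -> f (bsub x y) = bsub (f x) (f y).
Proof. intros H. unfold bsub. rewrite (proj1 H), linN; auto. Qed.
Lemma lin_comp (f : E -> F) (g : F -> G) : is_linear f -> is_linear g -> is_linear (fun x => g (f x)).
Proof.
  intros [Fa Fs] [Ga Gs]; split; intros; [rewrite Fa, Ga|rewrite Fs, Gs]; reflexivity.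
Qed.
Lemma bl_comp (f : E -> F) (g : F -> G) : bounded_linear f -> bounded_linear g -> bounded_linear (fun x => g (f x)).
Proof.
  intros Hf Hg. split. apply lin_comp; [apply Hf|apply Hg].
  destruct (bl_pos Hf) as [M1 [P1 H1]]. destruct (bl_pos Hg) as [M2 [P2 H2]].
  exists (M2 * M1). intro x. eapply Rle_trans. apply H2. rewrite Rmult_assoc.
  apply Rmult_le_compat_l; auto.
Qed.
End Lin.

Lemma Cmul_comm z w : Cmul z w = Cmul w z.
Proof. destruct z, w; unfold Cmul; simpl; f_equal; ring. Qed.
Lemma Cmul_assoc z w u : Cmul z (Cmul w u) = Cmul (Cmul z w) u.
Proof. destruct z, w, u; unfold Cmul; simpl; f_equal; ring. Qed.
Lemma Cmul_1r z : Cmul z Defs.C1 = z.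
Proof. destruct z; unfold Cmul, Defs.C1; simpl; f_equal; ring. Qed.
Lemma Cmul_1l z : Cmul Defs.C1 z = z.
Proof. rewrite Cmul_comm; apply Cmul_1r. Qed.
Lemma Cnorm_mul z w : Cnorm (Cmul z w) = Cnorm z * Cnorm w.
Proof.
  destruct z as [a b], w as [c d]; unfold Cnorm, Cmul; simpl.
  rewrite <- sqrt_mult by nra. f_equal; ring.
Qed.
Lemma Cnorm_ge0 z : 0 <= Cnorm z.
Proof. apply sqrt_pos. Qed.
Lemma Cnorm_C1 : Cnorm Defs.C1 = 1.
Proof. unfold Cnorm, Defs.C1; simpl. replace (1*1+0*0) with 1 by ring. apply sqrt_1. Qed.
Lemma Cnorm_C0 : Cnorm C0 = 0.
Proof. unfold Cnorm, C0; simpl. replace (0*0+0*0) with 0 by ring. apply sqrt_0. Qed.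
Definition Cinv (z : Cplx) : Cplx :=
  mkC (Cre z / (Cre z * Cre z + Cim z * Cim z)) (- Cim z / (Cre z * Cre z + Cim z * Cim z)).
Lemma Cinv_l z : z <> C0 -> Cmul (Cinv z) z = Defs.C1.
Proof.
  destruct z as [a b]; intro H. unfold Cinv, Cmul, Defs.C1; simpl.
  assert (a*a+b*b <> 0).
  { intro E. apply H. assert (a = 0) by nra. assert (b = 0) by nra. subst. reflexivity. }
  f_equal; field; auto.
Qed.

Lemma net_scale (D : Type) (le : D -> D -> Prop) (f g : D -> R) M :
  0 <= M -> net_to0 le f -> (forall i, Rabs (g i) <= M * Rabs (f i)) -> net_to0 le g.
Proof.
  intros HM Hf Hg eps Heps.
  destruct (Hf (eps / (M + 1))) as [a0 Ha0]. apply Rdiv_lt_0_compat; lra.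
  exists a0; intros a Ha. specialize (Ha0 a Ha). specialize (Hg a).
  assert (Rabs (f a) * (M + 1) < eps).
  { apply (Rmult_lt_compat_r (M+1)) in Ha0; [|lra].
    unfold Rdiv in Ha0. rewrite Rmult_assoc, Rinv_l in Ha0 by lra. lra. }
  pose proof (Rabs_pos (f a)). nra.
Qed.

Section Alg.
Variable A : BanachAlgebra.
Lemma mul_lin_l (z : A) : is_linear (fun y => bmul z y).
Proof. split; intros. apply bmul_addr. apply bmul_scalr. Qed.
Lemma mul_lin_r (z : A) : is_linear (fun y => bmul y z).
Proof. split; intros. apply bmul_addl. apply bmul_scall. Qed.
Lemma mul_subr (z u v : A) : bmul z (bsub u v) = bsub (bmul z u) (bmul z v).
Proof. apply (linB u v (mul_lin_l z)). Qed.
End Alg.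

Lemma bilin_comp (E F G H : BanachSpace) (P : PTensor G H) (f : E -> G) (g : F -> H) :
  is_linear f -> is_linear g -> is_bilinear (fun x y => ptens P (f x) (g y)).
Proof.
  intros Hf Hg. destruct (ptens_bilin P) as [H1 H2]. split; intro y.
  - apply (lin_comp Hf (H1 (g y))).
  - apply (lin_comp Hg (H2 (f y))).
Qed.

Lemma id_lin (E : BanachSpace) : is_linear (fun x : E => x).
Proof. split; reflexivity. Qed.

Lemma lact_spec (A : BanachAlgebra) (P : PTensor A A) (a : A) :
  bounded_linear (lact P a) /\ forall b c, lact P a (ptens P b c) = ptens P (bmul a b) c.
Proof.
  unfold lact. apply epsilon_spec.
  destruct (@ptens_univ _ _ P P (fun b c => ptens P (bmul a b) c) (bnorm a)) as [L [HL1 [HL2 HL3]]].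
  - apply norm_ge0.
  - apply (bilin_comp P (@mul_lin_l A a) (id_lin A)).
  - intros x y. eapply Rle_trans. apply ptens_norm.
    apply Rmult_le_compat_r. apply norm_ge0. apply bnorm_mul.
  - exists L. split; auto. split; auto. exists (bnorm a); auto.
Qed.

Lemma ppi_spec (A : BanachAlgebra) (P : PTensor A A) :
  bounded_linear (ppi P) /\ forall b c, ppi P (ptens P b c) = bmul b c.
Proof.
  unfold ppi. apply epsilon_spec.
  destruct (@ptens_univ _ _ P A (fun b c => bmul b c) 1) as [L [HL1 [HL2 HL3]]].
  - lra.
  - split; intro y. apply mul_lin_r. apply mul_lin_l.
  - intros x y. rewrite Rmult_1_l. apply bnorm_mul.
  - exists L. split; auto. split; auto. exists 1; auto.
Qed.

Fixpoint nser (A : BanachAlgebra) (z : A) (n : nat) : A :=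
  match n with O => z | S n => badd z (bmul z (nser A z n)) end.

Lemma small_pos r : 0 <= r -> (forall eps, 0 < eps -> r < eps) -> r = 0.
Proof. intros H1 H2. destruct (Rle_lt_or_eq_dec _ _ H1); auto. specialize (H2 r r0). lra. Qed.

Lemma Kt_lt K t eps : 0 <= K -> 0 <= t -> 0 < eps -> t < eps / (K + 1) -> K * t < eps.
Proof.
  intros HK Ht He H. assert (t * (K+1) < eps).
  { apply (Rmult_lt_compat_r (K+1)) in H; [|lra]. unfold Rdiv in H.
    rewrite Rmult_assoc, Rinv_l in H by lra. lra. }
  nra.
Qed.

Section CB.
Variable A : BanachAlgebra.
Variable z : A.
Variable q : R.
Hypothesis Hq : bnorm z = q.
Hypothesis Hq1 : q < 1.
Let s := @nser A z.
Let d0 := bnorm (bsub (s 1%nat) (s 0%nat)).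

Lemma step n : bnorm (bsub (s (S (S n))) (s (S n))) <= q * bnorm (bsub (s (S n)) (s n)).
Proof.
  change (bnorm (bsub (badd z (bmul z (s (S n)))) (badd z (bmul z (s n)))) <= q * bnorm (bsub (s (S n)) (s n))). rewrite sub_addl, <- mul_subr, <- Hq. apply bnorm_mul.
Qed.

Lemma dn n : bnorm (bsub (s (S n)) (s n)) <= q ^ n * d0.
Proof.
  induction n; simpl. rewrite Rmult_1_l; apply Rle_refl.
  eapply Rle_trans. apply step. rewrite Rmult_assoc. apply Rmult_le_compat_l.
  rewrite <- Hq; apply norm_ge0. auto.
Qed.

Lemma tail n k : bnorm (bsub (s (n + k)%nat) (s n)) <= d0 * q ^ n * (1 - q ^ k) / (1 - q).
Proof.
  assert (0 <= q) by (rewrite <- Hq; apply norm_ge0).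
  induction k.
  - rewrite Nat.add_0_r, subrr, norm0. simpl. unfold Rdiv. replace (1-1) with 0 by ring. lra.
  - eapply Rle_trans. apply (norm_sub_tri _ _ (s (n+k)%nat) _).
    rewrite Nat.add_succ_r. eapply Rle_trans. apply Rplus_le_compat. apply dn. apply IHk.
    rewrite pow_add. right. simpl. field. lra.
Qed.

Lemma tail2 n k : bnorm (bsub (s (n + k)%nat) (s n)) <= d0 / (1 - q) * q ^ n.
Proof.
  assert (0 <= q) by (rewrite <- Hq; apply norm_ge0).
  assert (0 <= d0) by apply norm_ge0.
  eapply Rle_trans. apply tail.
  assert (0 <= q ^ k) by (apply pow_le; auto).
  assert (0 <= q ^ n) by (apply pow_le; auto).
  unfold Rdiv. rewrite !Rmult_assoc. apply Rmult_le_compat_l; auto.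
  rewrite (Rmult_comm (/ (1-q))), <- Rmult_assoc. apply Rmult_le_compat_r.
  left; apply Rinv_0_lt_compat; lra. nra.
Qed.

Lemma nser_cauchy : exists l, forall eps, 0 < eps -> exists N, forall n, (N <= n)%nat ->
        bnorm (badd (s n) (bopp l)) < eps.
Proof.
  assert (0 <= q) by (rewrite <- Hq; apply norm_ge0).
  assert (0 <= d0) by apply norm_ge0.
  apply bcomplete. intros eps Heps.
  set (K := 2 * (d0 / (1 - q))).
  assert (0 <= K) by (unfold K; apply Rmult_le_pos; [lra| apply Rmult_le_pos; auto; left; apply Rinv_0_lt_compat; lra]).
  destruct (pow_lt_1_zero q) with (eps / (K + 1)) as [N HN].
  rewrite Rabs_pos_eq; lra. apply Rdiv_lt_0_compat; lra.
  exists N. intros m n Hm Hn.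
  replace m with (N + (m - N))%nat by lia. replace n with (N + (n - N))%nat by lia.
  eapply Rle_lt_trans. apply (norm_sub_tri _ _ (s N) _).
  rewrite (norm_sub_sym _ (s N)). eapply Rle_lt_trans. apply Rplus_le_compat; apply tail2.
  specialize (HN N (le_n _)). rewrite Rabs_pos_eq in HN by (apply pow_le; auto).
  replace (d0 / (1 - q) * q ^ N + d0 / (1 - q) * q ^ N) with (K * q ^ N) by (unfold K; ring).
  apply Kt_lt; auto. apply pow_le; auto.
Qed.

Lemma nser_fix : exists y : A, badd z (bmul z y) = y.
Proof.
  assert (0 <= q) by (rewrite <- Hq; apply norm_ge0).
  destruct nser_cauchy as [y Hy]. exists y. apply sub_eq0, bnorm_eq0.
  apply small_pos. apply norm_ge0. intros eps Heps.
  destruct (Hy (eps / 2)) as [N HN]. lra.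
  eapply Rle_lt_trans. apply (norm_sub_tri _ _ (s (S N)) _).
  unfold s at 1; simpl nser. rewrite sub_addl, <- mul_subr.
  eapply Rle_lt_trans. apply Rplus_le_compat_r. apply bnorm_mul.
  rewrite Hq, norm_sub_sym.
  pose proof (HN N (le_n _)). pose proof (HN (S N) (le_S _ _ (le_n _))).
  fold s. unfold bsub in *.
  assert (0 <= bnorm (badd (s N) (bopp y))) by apply norm_ge0.
  nra.
Qed.
End CB.

Lemma char_bound (A : BanachAlgebra) (phi : A -> Cplx) :
  is_character phi -> forall x, Cnorm (phi x) <= bnorm x.
Proof.
  intros [Pa [Ps [Pm _]]] x.
  destruct (Rle_lt_dec (Cnorm (phi x)) (bnorm x)) as [|Hlt]; auto. exfalso.
  assert (Hne : phi x <> C0).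
  { intro E. rewrite E, Cnorm_C0 in Hlt. pose proof (norm_ge0 _ x). lra. }
  set (z := bscal (Cinv (phi x)) x).
  assert (Hz : phi z = Defs.C1) by (unfold z; rewrite Ps; apply Cinv_l; auto).
  assert (Hq : bnorm z < 1).
  { unfold z. rewrite bnorm_scal.
    pose proof (Cnorm_mul (Cinv (phi x)) (phi x)). rewrite Cinv_l, Cnorm_C1 in H by auto.
    pose proof (Cnorm_ge0 (Cinv (phi x))). pose proof (norm_ge0 _ x). nra. }
  destruct (@nser_fix A z (bnorm z) eq_refl Hq) as [y Hy].
  apply (f_equal phi) in Hy. rewrite Pa, Pm, Hz in Hy.
  apply (f_equal Cre) in Hy. destruct (phi y). simpl in Hy. lra.
Qed.

Lemma phi_scal_bl (A : BanachAlgebra) (E : BanachSpace) (phi : A -> Cplx) (f : E -> A) (x0 : A) :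
  is_character phi -> bounded_linear f -> bounded_linear (fun t => bscal (phi (f t)) x0).
Proof.
  intros Hphi Hf. pose proof (char_bound Hphi) as CB.
  destruct Hphi as [Pa [Ps _]]. destruct (bl_pos Hf) as [M [HM HfM]].
  destruct Hf as [[fa fs] _]. split. split.
  - intros x y. rewrite fa, Pa. apply bscal_adds.
  - intros a x. rewrite fs, Ps. rewrite bscal_assoc. reflexivity.
  - exists (M * bnorm x0). intro t. rewrite bnorm_scal.
    pose proof (norm_ge0 _ x0). pose proof (norm_ge0 _ t). pose proof (CB (f t)).
    pose proof (HfM t). pose proof (Cnorm_ge0 (phi (f t))). nra.
Qed.

Theorem proposition2p8 (A : BanachAlgebra) (PA : PTensor A A) (phi : A -> Cplx)
  (I : A -> Prop) (B : BanachAlgebra) (PB : PTensor B B) (j : B -> A) :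
  is_character phi ->
  closed_ideal I ->
  presents_ideal I j ->
  (exists x, I x /\ phi x <> C0) ->
  approx_left_biproj PA phi ->
  is_character (fun x => phi (j x)) /\ approx_left_biproj PB (fun x => phi (j x)).
Proof.
  intros Hphi HI Hj [x1 [Ix1 Hx1]] [D [le [rho [Hdir [Hbl [HL [HR HP]]]]]]].
  destruct Hj as [jlin [jmul [jnorm jrng]]].
  pose proof Hphi as Hphi'.
  destruct Hphi' as [Pa [Ps [Pm Pne]]].
  destruct HI as [I0 [Iadd [Iscal [Imull [Imulr Iclosed]]]]].
  split.
  { split; [|split; [|split]].
    - intros x y. rewrite (proj1 jlin). apply Pa.
    - intros a x. rewrite (proj2 jlin). apply Ps.
    - intros x y. rewrite jmul. apply Pm.
    - destruct (proj1 (jrng x1) Ix1) as [y Hy]. exists y. rewrite Hy. auto. }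
  set (x0 := bscal (Cinv (phi x1)) x1).
  assert (Hx0 : phi x0 = Defs.C1) by (unfold x0; rewrite Ps; apply Cinv_l; auto).
  assert (Ix0 : I x0) by (apply Iscal; auto).
  assert (jinj : forall u v, j u = j v -> u = v).
  { intros u v H. apply sub_eq0, bnorm_eq0. rewrite <- jnorm, (linB _ _ jlin), H, subrr. apply norm0. }
  set (g := fun a : A => epsilon (inhabits (@bzero B)) (fun y => j y = bmul a x0)).
  assert (Hg : forall a, j (g a) = bmul a x0).
  { intro a. unfold g. apply epsilon_spec. apply jrng. apply Imull. auto. }
  assert (glin : is_linear g).
  { split; intros; apply jinj.
    - rewrite (proj1 jlin), !Hg. apply bmul_addl.
    - rewrite (proj2 jlin), !Hg. apply bmul_scall. }
  assert (gnorm : forall a, bnorm (g a) <= bnorm a * bnorm x0).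
  { intro a. rewrite <- jnorm, Hg. apply bnorm_mul. }
  set (M := bnorm x0 * bnorm x0).
  assert (HM : 0 <= M) by (apply Rmult_le_pos; apply norm_ge0).
  destruct (@ptens_univ _ _ PA PB (fun a c => ptens PB (g a) (g c)) M HM) as [T [Tlin [Tb Tel]]].
  { apply (bilin_comp PB glin glin). }
  { intros a c. eapply Rle_trans. apply ptens_norm.
    pose proof (gnorm a). pose proof (gnorm c).
    pose proof (norm_ge0 _ (g a)). pose proof (norm_ge0 _ (g c)).
    pose proof (norm_ge0 _ a). pose proof (norm_ge0 _ c). pose proof (norm_ge0 _ x0).
    unfold M. 
    apply Rle_trans with ((bnorm a * bnorm x0) * (bnorm c * bnorm x0)).
    apply Rmult_le_compat; auto. right; ring. }
  assert (Tbl : bounded_linear T) by (split; auto; exists M; auto).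
  assert (jbl : bounded_linear j) by (split; auto; exists 1; intro; rewrite jnorm; lra).
  exists D, le, (fun i y => T (rho i (j y))).
  split; auto. split.
  { intro i. apply (bl_comp (bl_comp jbl (Hbl i)) Tbl). }
  split; [|split].
  - intros b y.
    assert (Key : forall t, lact PB b (T t) = T (lact PA (j b) t)).
    { destruct (lact_spec _ PB b) as [LB LBe]. destruct (lact_spec _ PA (j b)) as [LA LAe].
      apply (@ptens_uniq _ _ PA PB (fun t => lact PB b (T t)) (fun t => T (lact PA (j b) t))).
      apply (bl_comp Tbl LB). apply (bl_comp LA Tbl).
      intros a c. rewrite Tel, LBe, LAe, Tel. f_equal. apply jinj.
      rewrite jmul, !Hg. apply bmul_assoc. }
    eapply net_scale with (M := M); [exact HM | exact (HL (j b) (j y)) |]. intro i. cbv beta.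
    rewrite Key, jmul, <- (linB _ _ Tlin).
    rewrite !Rabs_pos_eq by apply norm_ge0. apply Tb.
  - intros b y.
    eapply net_scale with (M := M); [exact HM | exact (HR (j b) (j y)) |]. intro i. cbv beta.
    rewrite jmul, <- (proj2 Tlin), <- (linB _ _ Tlin).
    rewrite !Rabs_pos_eq by apply norm_ge0. apply Tb.
  - intro y.
    assert (Key2 : forall t, phi (j (ppi PB (T t))) = phi (ppi PA t)).
    { intro t. destruct (ppi_spec _ PB) as [PiB PiBe]. destruct (ppi_spec _ PA) as [PiA PiAe].
      assert (E : bscal (phi (j (ppi PB (T t)))) x0 = bscal (phi (ppi PA t)) x0).
      { apply (@ptens_uniq _ _ PA A (fun t => bscal (phi (j (ppi PB (T t)))) x0)
                 (fun t => bscal (phi (ppi PA t)) x0)).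
        apply (phi_scal_bl _ Hphi (bl_comp (bl_comp Tbl PiB) jbl)).
        apply (phi_scal_bl _ Hphi PiA).
        intros a c. rewrite Tel, PiBe, PiAe, jmul, !Hg, !Pm, Hx0, !Cmul_1r. reflexivity. }
      apply (f_equal phi) in E. rewrite !Ps, Hx0, !Cmul_1r in E. exact E. }
    eapply net_scale with (M := 1); [exact Rle_0_1 | exact (HP (j y)) |]. intro i. cbv beta.
    rewrite Key2. lra.
Qed.
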